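(* Let $(V,\ell)$ be an $L_\infty$-algebra with finite-dimensional components, $V_0=\mathbb{R}^n$, such that $H^1(V,\ell)=0$, and let $h_1:V_1\to V_0$, $h_2:V_2\to V_1$ be linear maps with $\ell_1\circ h_1+h_2\circ\ell_1=\mathrm{id}_{V_1}$. Let $u_0=0$ and $u_1\in\ker(\ell_1|_{V_0})$, and define recursively $u_{k+1}=-h_1(Obs^k)$ for $k\geq1$, where $Obs^k=\sum_{i=2}^{k+1}\sum_{\vec r_i=k+1}\binom{k+1}{\vec r_i}\frac1{i!}\ell_i(u_{r_1},\ldots,u_{r_i})$. Then $u[\![t]\!]=\sum_{k\geq0}\frac{u_k}{k!}t^k\in\mathbb{R}^n[\![t]\!]$ is a formal Maurer–Cartan element.
   Context: An $L_\infty$-algebra is a sequence $\ell=(\ell_k)_{k\geq0}$ of graded symmetric $k$-linear degree-$1$ maps $\ell_k:V^{\times k}\to V$, $\ell_0=0$, satisfying the $L_\infty$ Jacobi identities; $H^1(V,\ell)=\ker(\ell_1:V_1\to V_2)/\operatorname{im}(\ell_1:V_0\to V_1)$. $\sum_{\vec r_i=m}$ sums over tuples $(r_1,\ldots,r_i)$ of positive integers with sum $m$ and $\binom{k+1}{\vec r_i}=\frac{(k+1)!}{r_1!\cdots r_i!}$. A formal Maurer–Cartan element is a Maurer–Cartan element of $V[\![t]\!]$ with $t$-linearly extended $\ell_k$; for $u[\![t]\!]=\sum\frac{u_k}{k!}t^k$ with $u_0=0$ this means $\ell_1(u_{k+1})+\sum_{i=2}^{k+1}\sum_{\vec r_i=k+1}\binom{k+1}{\vec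 r_i}\frac1{i!}\ell_i(u_{r_1},\ldots,u_{r_i})=0$ for all $k\geq0$. *)

(* Defs.v *)
From HB Require Import structures.
From mathcomp Require Import all_boot all_order all_algebra.
From mathcomp Require Import reals.
Set Implicit Arguments. Unset Strict Implicit. Unset Printing Implicit Defensive.
Import Order.TTheory GRing.Theory Num.Theory.
Local Open Scope ring_scope.

(* A graded real vector space with finite-dimensional components:
   V_i = 'rV[R]_(d i) for every integer degree i.
   Homogeneous elements are pairs (degree, vector). *)
Definition Linf_hom (R : realType) (d : int -> nat) := {i : int & 'rV[R]_(d i)}.

Definition hdeg (R : realType) d (h : Linf_hom R d) : int := projT1 h.

Definition hmk (R : realType) d (i : int) (v : 'rV[R]_(d i)) : Linf_hom R d :=
  existT (fun j => 'rV[R]_(d j)) i v.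

(* component of a homogeneous element in degree D (0 if of another degree) *)
Definition hval (R : realType) d (D : int) (h : Linf_hom R d) : 'rV[R]_(d D) :=
  match h with
  | existT i v =>
      match i =P D with
      | ReflectT e => eq_rect i (fun j => 'rV[R]_(d j)) v D e
      | ReflectF _ => 0
      end
  end.

Definition degsum (R : realType) d (s : seq (Linf_hom R d)) : int := \sum_(x <- s) hdeg x.

Definition ksgn (R : realType) (a b : int) : R :=
  if odd `|a|%N && odd `|b|%N then -1 else 1.

(* Koszul sign of the unshuffle sending s to (mask m s) ++ (mask (~m) s) *)
Definition unshuffle_sign (R : realType) d (s : seq (Linf_hom R d)) (m : seq bool) : R :=
  \prod_(p < size s) \prod_(q < size s | (p < q)%N && ~~ nth false m p && nth false m q)
     ksgn R (hdeg (nth (hmk (0 : 'rV[R]_(d 0))) s p))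
            (hdeg (nth (hmk (0 : 'rV[R]_(d 0))) s q)).

(* ell s = ell_k(s) with k = size s, applied to homogeneous arguments.
   L_infinity algebra (symmetric convention, all ell_k of degree 1). *)
Definition is_Linf (R : realType) d (ell : seq (Linf_hom R d) -> Linf_hom R d) : Prop :=
  [/\
      (forall s, hdeg (ell s) = degsum s + 1),
      hval 1 (ell [::]) = 0,
      (forall (a b : seq (Linf_hom R d)) (i D : int) (c : R) (v w : 'rV[R]_(d i)),
          hval D (ell (a ++ hmk (c *: v + w) :: b)) =
          c *: hval D (ell (a ++ hmk v :: b)) + hval D (ell (a ++ hmk w :: b))),
      (* graded symmetry (generated by adjacent transpositions) *)
      (forall (a b : seq (Linf_hom R d)) (x y : Linf_hom R d) (D : int),
          hval D (ell (a ++ y :: x :: b)) =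
          ksgn R (hdeg x) (hdeg y) *: hval D (ell (a ++ x :: y :: b)))
    &
      (forall s : seq (Linf_hom R d), (0 < size s)%N ->
          \sum_(m : (size s).-tuple bool | (0 < count id m)%N)
            unshuffle_sign s m *:
              hval (degsum s + 2) (ell (ell (mask m s) :: mask (map negb m) s)) = 0)].

Definition l1_01 (R : realType) d (ell : seq (Linf_hom R d) -> Linf_hom R d) (x : 'rV[R]_(d 0)) : 'rV[R]_(d 1) :=
  hval 1 (ell [:: hmk x]).
Definition l1_12 (R : realType) d (ell : seq (Linf_hom R d) -> Linf_hom R d) (x : 'rV[R]_(d 1)) : 'rV[R]_(d 2) :=
  hval 2 (ell [:: hmk x]).

Definition H1_vanishes (R : realType) d (ell : seq (Linf_hom R d) -> Linf_hom R d) : Prop :=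
  forall y : 'rV[R]_(d 1), l1_12 ell y = 0 -> exists x, l1_01 ell x = y.

Definition multinom (R : realType) (N : nat) (r : seq nat) : R :=
  (N`!)%:R / \prod_(x <- r) (x`!)%:R.

Definition Obs (R : realType) d (ell : seq (Linf_hom R d) -> Linf_hom R d) (u : nat -> 'rV[R]_(d 0)) (k : nat)
  : 'rV[R]_(d 1) :=
  \sum_(2 <= i < k.+2)
    \sum_(r : i.-tuple 'I_k.+2 |
           all (fun x : nat => (0 < x)%N) (map (@nat_of_ord k.+2) r) &&
           (\sum_(x <- (map (@nat_of_ord k.+2) r)) x == k.+1)%N)
      (multinom R k.+1 (map (@nat_of_ord k.+2) r) / (i`!)%:R) *:
        hval 1 (ell [seq hmk (u (nat_of_ord x)) | x <- r]).

Definition formal_MC (R : realType) d (ell : seq (Linf_hom R d) -> Linf_hom R d) (u : nat -> 'rV[R]_(d 0)) : Prop :=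
  u 0%N = 0 /\ forall k : nat, l1_01 ell (u k.+1) + Obs ell u k = 0.

(* Main.v *)
Require Import Defs.
From HB Require Import structures.
From mathcomp Require Import all_boot all_order all_algebra.
From mathcomp Require Import reals ring zify.
Set Implicit Arguments. Unset Strict Implicit. Unset Printing Implicit Defensive.
Import Order.TTheory GRing.Theory Num.Theory.
Local Open Scope ring_scope.

Fixpoint lsum (T : finType) (V : zmodType) (n : nat) (F : seq T -> V) : V :=
  match n with
  | 0 => F [::]
  | n.+1 => \sum_(x : T) lsum n (fun s => F (x :: s))
  end.

Lemma lsum_eq (T : finType) (V : zmodType) n (F G : seq T -> V) :
  (forall s, size s = n -> F s = G s) -> lsum n F = lsum n G.
Proof.
elim: n F G => [|n IH] F G H /=; first exact: H.
apply: eq_bigr => x _; apply: IH => s hs; apply: H; by rewrite /= hs.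
Qed.

Lemma lsum0 (T : finType) (V : zmodType) n : lsum n (fun _ : seq T => (0 : V)) = 0.
Proof. elim: n => [|n IH] //=; apply: big1 => x _; exact: IH. Qed.

Lemma lsum_eq0 (T : finType) (V : zmodType) n (F : seq T -> V) :
  (forall s, size s = n -> F s = 0) -> lsum n F = 0.
Proof. move=> H; rewrite (lsum_eq (G := fun _ => 0)) //; exact: lsum0. Qed.

Lemma lsum_sum (T : finType) (V : zmodType) (I : Type) (r : seq I) (P : pred I) n
  (F : I -> seq T -> V) :
  lsum n (fun s => \sum_(i <- r | P i) F i s) = \sum_(i <- r | P i) lsum n (F i).
Proof.
elim: n F => [|n IH] F //=.
under eq_bigr => x _ do rewrite IH.
by rewrite exchange_big.
Qed.

Lemma lsum_morph (T : finType) (V W : zmodType) (f : V -> W) n (F : seq T -> V) :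
  f 0 = 0 -> (forall x y, f (x + y) = f x + f y) ->
  f (lsum n F) = lsum n (fun s => f (F s)).
Proof.
move=> f0 fD; elim: n F => [|n IH] F //=.
rewrite (big_morph f fD f0); apply: eq_bigr => x _; exact: IH.
Qed.

Lemma lsumZ (T : finType) (R : pzRingType) (V : lmodType R) (c : R) n (F : seq T -> V) :
  c *: lsum n F = lsum n (fun s => c *: F s).
Proof. apply: lsum_morph; [exact: scaler0 | exact: scalerDr]. Qed.

Lemma lsum_exchange (T1 T2 : finType) (V : zmodType) n1 n2 (F : seq T1 -> seq T2 -> V) :
  lsum n1 (fun a => lsum n2 (fun b => F a b)) = lsum n2 (fun b => lsum n1 (fun a => F a b)).
Proof.
elim: n2 F => [|n2 IH] F //=.
rewrite lsum_sum; apply: eq_bigr => x _; exact: IH.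
Qed.

Lemma lsum_tuple (T : finType) (V : zmodType) n (F : seq T -> V) :
  \sum_(t : n.-tuple T) F t = lsum n F.
Proof.
elim: n F => [|n IH] F /=.
  rewrite (big_pred1 [tuple]) // => t /=.
  have -> : t = [tuple] by apply: tuple0.
  by apply/esym/eqP.
rewrite (reindex (fun p : T * n.-tuple T => [tuple of p.1 :: p.2])) /=.
  rewrite -(pair_big xpredT xpredT (fun x (t : n.-tuple T) => F (x :: t))) /=.
  apply: eq_bigr => x _. rewrite -IH. done.
exists (fun t : n.+1.-tuple T => (thead t, [tuple of behead t])).
  by case=> x t _ /=; rewrite theadE; congr pair; apply: val_inj.
by move=> t _; rewrite [in RHS](tuple_eta t).
Qed.

Lemma lsum_mask (T : finType) (V : zmodType) (m : seq bool) (G : seq T -> seq T -> V) :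
  lsum (size m) (fun r => G (mask m r) (mask (map negb m) r)) =
  lsum (count id m) (fun a => lsum (count negb m) (fun b => G a b)).
Proof.
elim: m G => [|b m IH] G //=.
case: b => /=.
  apply: eq_bigr => x _.
  exact: (IH (fun a b => G (x :: a) b)).
under [RHS]lsum_eq => a _ do rewrite /=.
rewrite lsum_sum; apply: eq_bigr => x _.
exact: (IH (fun a b => G a (x :: b))).
Qed.

Lemma lsum_count (V : zmodType) n (g : nat -> V) :
  lsum n (fun m : seq bool => g (count id m)) = \sum_(0 <= i < n.+1) g i *+ 'C(n, i).
Proof.
elim: n g => [|n IH] g /=.
  by rewrite big_nat1.
rewrite big_bool /=.
rewrite (IH (fun i => g (1 + i)%N)) (IH g).
have E1 : \sum_(0 <= i < n.+2) g i *+ 'C(n.+1, i) =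
    g 0%N + (\sum_(0 <= i < n.+1) g i.+1 *+ 'C(n, i.+1) + \sum_(0 <= i < n.+1) g i.+1 *+ 'C(n, i)).
  rewrite big_ltn // bin0 mulr1n big_add1 /=; congr (_ + _).
  by rewrite -big_split /=; apply: eq_bigr => i _; rewrite binS mulrnDr.
have E2 : \sum_(0 <= i < n.+1) g i *+ 'C(n, i) = g 0%N + \sum_(0 <= i < n.+1) g i.+1 *+ 'C(n, i.+1).
  rewrite big_ltn // bin0 mulr1n big_add1 /=; congr (_ + _).
  by rewrite [in RHS]big_nat_recr //= bin_small // mulr0n addr0.
rewrite E1 E2 addrCA; congr (_ + _); rewrite addrC; congr (_ + _).
Qed.

Lemma triangle (V : zmodType) B (f : nat -> nat -> V) :
  \sum_(0 <= n < B) \sum_(0 <= i < n.+1) f i (n - i)%N =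
  \sum_(0 <= i < B) \sum_(0 <= j < B) (if (i + j < B)%N then f i j else 0).
Proof.
transitivity (\sum_(0 <= n < B) \sum_(0 <= i < B) (if (i <= n)%N then f i (n - i)%N else 0)).
  apply: eq_big_nat => n /andP[_ hn].
  rewrite (big_nat_widen _ _ _ _ _ hn) big_mkcond /=.
  by apply: eq_bigr => i _; rewrite ltnS.
rewrite exchange_big; apply: eq_big_nat => i /andP[_ hi].
rewrite (@big_cat_nat _ _ _ i) //=; last exact: ltnW.
rewrite big_nat_cond big1 ?add0r; last first.
  by move=> n /andP[/andP[_ h] _]; rewrite leqNgt h.
rewrite (eq_big_nat _ _ (F2 := fun n => f i (n - i)%N)); last first.
  by move=> n /andP[h _]; rewrite h.
rewrite -{1}(add0n i) big_addn.
rewrite [in RHS](@big_cat_nat _ _ _ (B - i)%N) //=; last exact: leq_subr.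
rewrite [X in _ = _ + X]big_nat_cond [X in _ = _ + X]big1 ?addr0; last first.
  move=> j /andP[/andP[h1 _] _]; rewrite ifF //; apply/negbTE; rewrite -leqNgt.
  by rewrite -leq_subLR.
apply: eq_big_nat => j /andP[_ hj]; rewrite addnK ifT //.
by rewrite -ltn_subRL.
Qed.

Definition lsumN (V : zmodType) (M n : nat) (F : seq nat -> V) : V :=
  lsum n (fun s : seq 'I_M => F (map val s)).

Lemma lsumN_S (V : zmodType) M n (F : seq nat -> V) :
  lsumN M n.+1 F = \sum_(x < M) lsumN M n (fun s => F (val x :: s)).
Proof. by []. Qed.

Lemma lsumN_widen (V : zmodType) M1 M2 n (F : seq nat -> V) :
  (M1 <= M2)%N -> (forall s, ~~ all (fun x => x < M1)%N s -> F s = 0) ->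
  lsumN M2 n F = lsumN M1 n F.
Proof.
move=> hM; elim: n F => [|n IH] F hF //.
rewrite !lsumN_S.
pose G := fun x : nat => lsumN M1 n (fun s => F (x :: s)).
rewrite (eq_bigr (fun x : 'I_M2 => G x)); last first.
  move=> x _; apply: IH => s hs; apply: hF; by rewrite /= negb_and hs orbT.
rewrite -(big_mkord xpredT G) -(big_mkord xpredT G).
rewrite [LHS](@big_cat_nat _ _ _ M1) //= [X in _ + X]big_nat_cond [X in _ + X]big1 ?addr0 //.
move=> x /andP[/andP[h _] _]; apply: lsum_eq0 => s _; apply: hF.
by rewrite /= negb_and -leqNgt h.
Qed.

Lemma hval_hmk (R : realType) d (D : int) (v : 'rV[R]_(d D)) : hval D (hmk v) = v.
Proof.
rewrite /hval /hmk; case: (D =P D) => [e|//].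
by rewrite (eq_irrelevance e erefl).
Qed.

Lemma hmk_hval (R : realType) d (h : Linf_hom R d) D : hdeg h = D -> h = hmk (hval D h).
Proof.
case: h => i v /= e; subst D.
change (hmk v = hmk (hval i (hmk v))); by rewrite hval_hmk.
Qed.

Lemma mask_count0 (T : Type) (m : seq bool) (s : seq T) : count id m = 0%N -> mask m s = [::].
Proof.
elim: m s => [|b m IH] [|x s] //=; case: b => //= h; exact: IH.
Qed.

Lemma zero_in (s : seq nat) : (sumn s < size s)%N -> 0%N \in s.
Proof.
elim: s => [|x s IH] //=; case: x => [|x] /= h; first by rewrite inE eqxx.
rewrite inE IH ?orbT //; lia.
Qed.

Lemma sumn_mask (m : seq bool) (r : seq nat) : size m = size r ->
  sumn r = (sumn (mask m r) + sumn (mask (map negb m) r))%N.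
Proof.
elim: r m => [|x r IH] [|b m] //= hs; try congruence.
have {}hs : size m = size r by case: hs.
case: b => /=; rewrite (IH m hs); lia.
Qed.

Lemma prod_mask (R : comPzRingType) (F : nat -> R) (m : seq bool) (r : seq nat) : size m = size r ->
  \prod_(x <- r) F x = (\prod_(x <- mask m r) F x) * \prod_(x <- mask (map negb m) r) F x.
Proof.
elim: r m => [|x r IH] [|b m] //= hs; try congruence.
  by rewrite !big_nil mulr1.
have {}hs : size m = size r by case: hs.
case: b => /=; rewrite !big_cons (IH m hs); [by rewrite mulrA | by rewrite mulrCA].
Qed.

Section Main.
Variables (R : realType) (d : int -> nat) (ell : seq (Linf_hom R d) -> Linf_hom R d)
  (u : nat -> 'rV[R]_(d 0)).
Hypothesis hL : is_Linf ell.
Hypothesis hu0 : u 0%N = 0.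

Definition fu (j : nat) : Linf_hom R d := hmk (u j).
Definition Lnat (s : seq nat) : 'rV[R]_(d 1) := hval 1 (ell (map fu s)).
Definition L2 (y : 'rV[R]_(d 1)) (s : seq nat) : 'rV[R]_(d 2) := hval 2 (ell (hmk y :: map fu s)).

Lemma ML0 a b (i D : int) : hval D (ell (a ++ hmk (0 : 'rV[R]_(d i)) :: b)) = 0.
Proof.
case: hL => _ _ hML _ _.
have := hML a b i D 1 0 0; rewrite scaler0 addr0 scale1r => H.
have : hval D (ell (a ++ hmk (0 : 'rV[R]_(d i)) :: b)) + hval D (ell (a ++ hmk (0 : 'rV[R]_(d i)) :: b)) =
   hval D (ell (a ++ hmk (0 : 'rV[R]_(d i)) :: b)) + 0 by rewrite addr0 -H.
exact: addrI.
Qed.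

Lemma Lnat0 s : 0%N \in s -> Lnat s = 0.
Proof.
case/splitPr => s1 s2; rewrite /Lnat map_cat /= {2}/fu hu0; exact: ML0.
Qed.

Lemma L2_0s y s : 0%N \in s -> L2 y s = 0.
Proof.
case/splitPr => s1 s2; rewrite /L2 map_cat /= {2}/fu hu0.
exact: (ML0 (hmk y :: map fu s1)).
Qed.

Lemma Lnat_nil : Lnat [::] = 0.
Proof. by case: hL. Qed.

Lemma L2D y z s : L2 (y + z) s = L2 y s + L2 z s.
Proof.
case: hL => _ _ hML _ _.
have H := hML [::] (map fu s) 1 2 1 y z; rewrite !scale1r in H; exact: H.
Qed.

Lemma L2_0 s : L2 0 s = 0.
Proof. exact: (ML0 [::]). Qed.

Lemma L2Z c y s : L2 (c *: y) s = c *: L2 y s.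
Proof.
case: hL => _ _ hML _ _.
have H := hML [::] (map fu s) 1 2 c y 0; rewrite addr0 /= in H.
rewrite /L2 H; by rewrite -/(L2 0 s) L2_0 addr0.
Qed.

Lemma L2_sum (I : Type) (r : seq I) (P : pred I) (F : I -> 'rV[R]_(d 1)) s :
  L2 (\sum_(i <- r | P i) F i) s = \sum_(i <- r | P i) L2 (F i) s.
Proof. exact: (big_morph (L2^~ s) (fun x y => L2D x y s) (L2_0 s)). Qed.

Lemma L2_lsum (T : finType) n (F : seq T -> 'rV[R]_(d 1)) s :
  L2 (lsum n F) s = lsum n (fun a => L2 (F a) s).
Proof. apply: (lsum_morph (f := L2^~ s)); [exact: L2_0 | move=> x y; exact: L2D]. Qed.

Lemma hdeg_nth (s : seq nat) p : hdeg (nth (hmk (0 : 'rV[R]_(d 0))) (map fu s) p) = 0.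
Proof. elim: s p => [|x s IH] [|p] //=. Qed.

Lemma degsum_fu (s : seq nat) : degsum (map fu s) = 0.
Proof. by rewrite /degsum big_map big1. Qed.

Lemma jacobi0 (s : seq nat) :
  \sum_(m : (size s).-tuple bool) L2 (Lnat (mask m s)) (mask (map negb m) s) = 0.
Proof.
case: hL => hdg _ _ _ hJ.
rewrite (bigID (fun m : (size s).-tuple bool => 0 < count id m)%N) /=.
rewrite [X in _ + X]big1 ?addr0; last first.
  move=> m; rewrite lt0n negbK => /eqP h.
  by rewrite (mask_count0 _ h) Lnat_nil L2_0.
case: (posnP (size s)) => hs.
  apply: big1 => m hm; exfalso; have h := count_size id m.
  rewrite size_tuple in h.
  have h2 : (count id m <= 0)%N by apply: (leq_trans h); rewrite hs.
  by rewrite ltnNge h2 in hm.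
have J := hJ (map fu s) ltac:(by rewrite size_map).
rewrite size_map degsum_fu add0r in J; rewrite -{2}J; apply: eq_bigr => m hm.
have -> : unshuffle_sign (map fu s) m = 1.
  rewrite /unshuffle_sign big1 // => p _; rewrite big1 // => q _.
  by rewrite !hdeg_nth.
rewrite scale1r -!map_mask.
have -> : ell (map fu (mask m s)) = hmk (Lnat (mask m s)).
  by apply: hmk_hval; rewrite hdg degsum_fu add0r.
by [].
Qed.


Lemma fact_neq0 n : (n`!)%:R != 0 :> R.
Proof. by rewrite pnatr_eq0 -lt0n fact_gt0. Qed.

Lemma prodfact_neq0 (s : seq nat) : \prod_(x <- s) (x`!)%:R != 0 :> R.
Proof. by apply/lt0r_neq0/prodr_gt0 => x _; rewrite ltr0n fact_gt0. Qed.

Definition cc (p : nat) (s : seq nat) : R := if sumn s == p then multinom R p s else 0.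

Lemma cc_split N (r a b : seq nat) :
  sumn r = (sumn a + sumn b)%N ->
  \prod_(x <- r) (x`!)%:R = (\prod_(x <- a) (x`!)%:R) * \prod_(x <- b) (x`!)%:R :> R ->
  cc N r = \sum_(p < N.+1) 'C(N, p)%:R * (cc p a * cc (N - p) b).
Proof.
move=> hs hpr; rewrite /cc /multinom hs hpr.
case: eqP => [hN|hN].
  have ha : (sumn a < N.+1)%N by rewrite -hN ltnS leq_addr.
  rewrite (bigD1 (inord (sumn a))) //= [X in _ = _ + X]big1 ?addr0; last first.
    move=> p hp; suff -> : (sumn a == p) = false by rewrite mul0r mulr0.
    apply/negbTE; apply: contra hp => /eqP e; apply/eqP/val_inj.
    by rewrite /= inordK // e.
  rewrite inordK // eqxx.
  have -> : (N - sumn a)%N = sumn b by rewrite -hN addKn.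
  rewrite eqxx.
  have := bin_fact (leq_addr (sumn b) (sumn a)); rewrite addKn hN => hf.
  rewrite -hf !natrM.
  have h1 := prodfact_neq0 a; have h2 := prodfact_neq0 b.
  field; by rewrite h1 h2.
rewrite big1 // => p _.
case: eqP => [e|]; last by rewrite mul0r mulr0.
case: eqP => [e'|]; last by rewrite !mulr0.
exfalso; apply: hN; rewrite e e' subnKC //.
by rewrite -ltnS.
Qed.

Lemma ccL0 p a : (p < size a)%N -> cc p a *: Lnat a = 0.
Proof.
rewrite /cc; case: eqP => [e|_] h; last by rewrite scale0r.
by rewrite Lnat0 ?scaler0 // zero_in // e.
Qed.

Lemma ccL2 q b y : (q < size b)%N -> cc q b *: L2 y b = 0.
Proof.
rewrite /cc; case: eqP => [e|_] h; last by rewrite scale0r.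
by rewrite L2_0s ?scaler0 // zero_in // e.
Qed.

Lemma cc0Lnat a : cc 0 a *: Lnat a = 0.
Proof. case: a => [|x a]; [by rewrite Lnat_nil scaler0 | exact: ccL0]. Qed.

Definition Psi N (a b : seq nat) : 'rV[R]_(d 2) :=
  \sum_(p < N.+1) ('C(N, p)%:R * (cc p a * cc (N - p) b)) *: L2 (Lnat a) b.

Lemma Psi0a N a b : (N < size a)%N -> Psi N a b = 0.
Proof.
move=> h; apply: big1 => p _; rewrite /cc.
case: eqP => [e|]; last by rewrite mul0r mulr0 scale0r.
rewrite Lnat0 ?L2_0 ?scaler0 // zero_in // e.
by apply: leq_ltn_trans h; rewrite -ltnS.
Qed.

Lemma Psi0b N a b : (N < size b)%N -> Psi N a b = 0.
Proof.
move=> h; apply: big1 => p _; rewrite [cc (N - p) b]/cc.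
case: eqP => [e|]; last by rewrite !mulr0 scale0r.
rewrite L2_0s ?scaler0 // zero_in // e.
by apply: leq_ltn_trans h; apply: leq_subr.
Qed.


Definition Q N M i j : 'rV[R]_(d 2) := lsumN M i (fun a => lsumN M j (fun b => Psi N a b)).

Definition Gp M B p : 'rV[R]_(d 1) :=
  \sum_(i < B) (i`!%:R)^-1 *: lsumN M i (fun a => cc p a *: Lnat a).

Lemma jacobiN n r : size r = n ->
  \sum_(m : n.-tuple bool) L2 (Lnat (mask m r)) (mask (map negb m) r) = 0.
Proof. move=> <-; exact: jacobi0. Qed.

Lemma stepJ N M B : \sum_(n < B) (n`!%:R)^-1 *: lsumN M n (fun r => cc N r *:
   \sum_(m : n.-tuple bool) L2 (Lnat (mask m r)) (mask (map negb m) r)) = 0.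
Proof.
apply: big1 => n _; rewrite /lsumN lsum_eq0 ?scaler0 // => s hs.
by rewrite jacobiN ?scaler0 // size_map.
Qed.

Lemma E2 N M (m : seq bool) :
  lsumN M (size m) (fun r => Psi N (mask m r) (mask (map negb m) r)) =
  Q N M (count id m) (size m - count id m).
Proof.
rewrite /lsumN.
have -> : lsum (size m) (fun s : seq 'I_M => Psi N (mask m (map val s)) (mask (map negb m) (map val s)))
   = lsum (size m) (fun s : seq 'I_M => Psi N (map val (mask m s)) (map val (mask (map negb m) s))).
  by apply: lsum_eq => s _; rewrite !map_mask.
rewrite (lsum_mask m (fun a b : seq 'I_M => Psi N (map val a) (map val b))).
have h := count_predC id m.
have -> : count negb m = (size m - count id m)%N by rewrite -h addKn.
by [].
Qed.

Lemma step_n N M n : (n`!%:R)^-1 *: lsumN M n (fun r => cc N r *: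
   \sum_(m : n.-tuple bool) L2 (Lnat (mask m r)) (mask (map negb m) r)) =
   \sum_(0 <= i < n.+1) ((i`!%:R)^-1 * ((n - i)`!%:R)^-1) *: Q N M i (n - i).
Proof.
have E1 : lsumN M n (fun r => cc N r *:
   \sum_(m : n.-tuple bool) L2 (Lnat (mask m r)) (mask (map negb m) r)) =
   lsum n (fun m : seq bool => lsumN M n (fun r => Psi N (mask m r) (mask (map negb m) r))).
  rewrite /lsumN -lsum_exchange; apply: lsum_eq => s hs.
  rewrite scaler_sumr.
  rewrite (lsum_tuple n (fun m : seq bool => cc N (map val s) *:
     L2 (Lnat (mask m (map val s))) (mask (map negb m) (map val s)))).
  apply: lsum_eq => m hm; rewrite /Psi -scaler_suml; congr (_ *: _).
  have hsm : size m = size (map val s) by rewrite size_map hm hs.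
  apply: cc_split; [exact: sumn_mask | exact: prod_mask].
rewrite E1.
rewrite (lsum_eq (G := fun m : seq bool => Q N M (count id m) (n - count id m))); last first.
  by move=> m hm; rewrite -hm E2.
rewrite (lsum_count n (fun i => Q N M i (n - i))) scaler_sumr.
apply: eq_big_nat => i /andP[_ hi]; rewrite -scaler_nat scalerA; congr (_ *: _).
have hf := @bin_fact n i hi; rewrite -hf !natrM.
have h1 := fact_neq0 i; have h2 := fact_neq0 (n - i).
field; by rewrite h1 h2 pnatr_eq0 -lt0n bin_gt0.
Qed.

Lemma Q0 N M i j : (N < i)%N || (N < j)%N -> Q N M i j = 0.
Proof.
move=> h; rewrite /Q /lsumN; apply: lsum_eq0 => a ha; apply: lsum_eq0 => b hb.
case/orP: h => h; [apply: Psi0a | apply: Psi0b]; by rewrite size_map ?ha ?hb.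
Qed.


Definition Kt N M p i j (a b : seq 'I_M) : 'rV[R]_(d 2) :=
  ('C(N, p)%:R * ((i`!%:R)^-1 * (j`!%:R)^-1) * (cc p (map val a) * cc (N - p) (map val b)))
    *: L2 (Lnat (map val a)) (map val b).

Lemma rearrL N M B :
  \sum_(i < B) \sum_(j < B) ((i`!%:R)^-1 * (j`!%:R)^-1) *: Q N M i j =
  \sum_(p < N.+1) \sum_(i < B) \sum_(j < B) lsum i (fun a : seq 'I_M => lsum j (fun b : seq 'I_M => Kt N p i j a b)).
Proof.
transitivity (\sum_(i < B) \sum_(j < B) \sum_(p < N.+1)
   lsum i (fun a : seq 'I_M => lsum j (fun b : seq 'I_M => Kt N p i j a b))).
  apply: eq_bigr => i _; apply: eq_bigr => j _.
  rewrite /Q /lsumN lsumZ -lsum_sum; apply: lsum_eq => a _.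
  rewrite lsumZ -lsum_sum; apply: lsum_eq => b _.
  rewrite /Psi scaler_sumr; apply: eq_bigr => p _.
  rewrite scalerA /Kt; congr (_ *: _); ring.
under eq_bigr => i _ do rewrite exchange_big.
by rewrite exchange_big.
Qed.

Lemma rearrR N M B :
  \sum_(p < N.+1) 'C(N, p)%:R *: \sum_(j < B) (j`!%:R)^-1 *:
     lsumN M j (fun b => cc (N - p) b *: L2 (Gp M B p) b) =
  \sum_(p < N.+1) \sum_(i < B) \sum_(j < B) lsum i (fun a : seq 'I_M => lsum j (fun b : seq 'I_M => Kt N p i j a b)).
Proof.
apply: eq_bigr => p _; rewrite scaler_sumr.
transitivity (\sum_(j < B) \sum_(i < B) lsum j (fun b : seq 'I_M => lsum i (fun a : seq 'I_M => Kt N p i j a b))).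
  apply: eq_bigr => j _.
  rewrite scalerA /lsumN lsumZ -lsum_sum; apply: lsum_eq => b _.
  rewrite /Gp L2_sum !scaler_sumr; apply: eq_bigr => i _.
  rewrite L2Z /lsumN L2_lsum !lsumZ; apply: lsum_eq => a _.
  rewrite L2Z !scalerA /Kt; congr (_ *: _); ring.
rewrite exchange_big; apply: eq_bigr => i _; apply: eq_bigr => j _.
by rewrite lsum_exchange.
Qed.

Lemma claimA N :
  \sum_(p < N.+1) 'C(N, p)%:R *: \sum_(j < (N + N).+1) (j`!%:R)^-1 *:
     lsumN N.+1 j (fun b => cc (N - p) b *: L2 (Gp N.+1 (N + N).+1 p) b) = 0.
Proof.
rewrite rearrR -rearrL -[RHS](stepJ N N.+1 (N + N).+1).
under [RHS]eq_bigr => n _ do rewrite step_n.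
rewrite -(big_mkord xpredT (fun n => \sum_(0 <= i < n.+1)
   ((i`!%:R)^-1 * ((n - i)`!%:R)^-1) *: Q N N.+1 i (n - i))).
rewrite (triangle (N + N).+1 (fun i j => ((i`!%:R)^-1 * (j`!%:R)^-1) *: Q N N.+1 i j)).
rewrite -(big_mkord xpredT (fun i => \sum_(j < (N + N).+1) ((i`!%:R)^-1 * (j`!%:R)^-1) *: Q N N.+1 i j)).
apply: eq_big_nat => i /andP[_ hi].
rewrite -(big_mkord xpredT (fun j => ((i`!%:R)^-1 * (j`!%:R)^-1) *: Q N N.+1 i j)).
apply: eq_big_nat => j /andP[_ hj].
case: ifP => // h; rewrite Q0 ?scaler0 //.
apply/orP; move/negbT: h; rewrite -leqNgt => h.
case: (leqP i N) => hiN; last by left.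
right; lia.
Qed.


Lemma Gp0 M B : Gp M B 0 = 0.
Proof.
apply: big1 => i _; rewrite /lsumN lsum_eq0 ?scaler0 // => s _; exact: cc0Lnat.
Qed.

Lemma mem_le_sumn (s : seq nat) x : x \in s -> (x <= sumn s)%N.
Proof.
elim: s => [|y s IH] //=; rewrite inE => /orP[/eqP -> | h]; first exact: leq_addr.
exact: leq_trans (IH h) (leq_addl _ _).
Qed.

Lemma obs_i k i :
  \sum_(r : i.-tuple 'I_k.+2 |
           all (fun x : nat => (0 < x)%N) (map (@nat_of_ord k.+2) r) &&
           (\sum_(x <- (map (@nat_of_ord k.+2) r)) x == k.+1)%N)
      (multinom R k.+1 (map (@nat_of_ord k.+2) r) / (i`!)%:R) *:
        hval 1 (ell [seq hmk (u (nat_of_ord x)) | x <- r]) =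
  (i`!%:R)^-1 *: lsumN k.+2 i (fun a => cc k.+1 a *: Lnat a).
Proof.
rewrite big_mkcond /=.
rewrite (lsum_tuple i (fun s : seq 'I_k.+2 =>
   if all (fun x : nat => (0 < x)%N) (map (@nat_of_ord k.+2) s) &&
           (\sum_(x <- (map (@nat_of_ord k.+2) s)) x == k.+1)%N
   then (multinom R k.+1 (map (@nat_of_ord k.+2) s) / (i`!)%:R) *:
        hval 1 (ell [seq hmk (u (nat_of_ord x)) | x <- s]) else 0)).
rewrite /lsumN lsumZ; apply: lsum_eq => s _.
have -> : [seq hmk (u (nat_of_ord x)) | x <- s] = map fu (map val s) by rewrite -map_comp.
case: ifP => [/andP[_ /eqP hs]|hn].
  by rewrite /cc sumnE hs eqxx scalerA mulrC.
rewrite /cc; case: eqP => [hs|]; last by rewrite scale0r scaler0.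
move: hn; rewrite -sumnE hs eqxx andbT => /negbT hn.
rewrite Lnat0 ?scaler0 //.
move: hn; rewrite -has_predC => /hasP [x hx] /=.
by rewrite lt0n negbK => /eqP <-.
Qed.

Lemma Gp_obs N k : (k.+1 <= N)%N ->
  Gp N.+1 (N + N).+1 k.+1 = l1_01 ell (u k.+1) + Obs ell u k.
Proof.
move=> hk.
rewrite /Gp -(big_mkord xpredT (fun i => (i`!%:R)^-1 *: lsumN N.+1 i (fun a => cc k.+1 a *: Lnat a))).
rewrite big_ltn // big_ltn; last by lia.
rewrite (@big_cat_nat _ _ _ k.+2) //=; last by lia.
rewrite [X in _ + (_ + (_ + X))]big_nat_cond [X in _ + (_ + (_ + X))]big1; last first.
  move=> i /andP[/andP[hi _] _]; rewrite /lsumN lsum_eq0 ?scaler0 // => s hs.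
  by apply: ccL0; rewrite size_map hs.
rewrite addr0 /lsumN /= Lnat_nil !scaler0 add0r.
rewrite invr1 scale1r.
have hk2 : (k.+1 < N.+1)%N by [].
have H1 : \sum_(x < N.+1) cc k.+1 [:: val x] *: Lnat [:: val x] = l1_01 ell (u k.+1).
  rewrite (bigD1 (Ordinal hk2)) //= big1 ?addr0; last first.
    move=> x hx; rewrite /cc /= addn0 ifF ?scale0r //.
    apply/negbTE; apply: contra hx => /eqP e; apply/eqP/val_inj; exact: e.
  rewrite /cc /= addn0 eqxx /multinom big_seq1 divff ?scale1r //; exact: fact_neq0.
rewrite H1; congr (_ + _).
rewrite /Obs; apply: eq_big_nat => i _.
rewrite obs_i; congr (_ *: _); apply: lsumN_widen => // s hs.
rewrite /cc; case: eqP => [e|]; last by rewrite scale0r.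
exfalso; move: hs; rewrite -has_predC => /hasP [x hx] /=.
rewrite -leqNgt => h; have := mem_le_sumn hx; rewrite e; lia.
Qed.


Lemma l1l1 N : l1_12 ell (l1_01 ell (u N)) = 0.
Proof.
have := jacobi0 [:: N].
rewrite (lsum_tuple (size [:: N]) (fun m : seq bool =>
   L2 (Lnat (mask m [:: N])) (mask (map negb m) [:: N]))) /= big_bool /=.
by rewrite Lnat_nil L2_0 addr0.
Qed.

Lemma l2_of_claim N : (forall p, (p < N)%N -> Gp N.+1 (N + N).+1 p = 0) ->
  l1_12 ell (Gp N.+1 (N + N).+1 N) = 0.
Proof.
move=> hG; have := claimA N.
rewrite big_ord_recr /= big1 ?add0r; last first.
  move=> p _; rewrite hG // big1 ?scaler0 // => j _.
  by rewrite /lsumN lsum_eq0 ?scaler0 // => s _; rewrite L2_0 scaler0.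
rewrite binn subnn scale1r big_ord_recl /= big1 ?addr0; last first.
  move=> j _; rewrite /lsumN lsum_eq0 ?scaler0 // => s hs.
  by apply: ccL2; rewrite size_map hs.
rewrite /lsumN /= /cc /= /multinom big_nil divr1 invr1 !scale1r.
by [].
Qed.

Lemma mainMC (h1 : {linear 'rV[R]_(d 1) -> 'rV[R]_(d 0)})
  (h2 : {linear 'rV[R]_(d 2) -> 'rV[R]_(d 1)}) :
  (forall y : 'rV[R]_(d 1), l1_01 ell (h1 y) + h2 (l1_12 ell y) = y) ->
  l1_01 ell (u 1%N) = 0 ->
  (forall k : nat, (1 <= k)%N -> u k.+1 = - h1 (Obs ell u k)) ->
  forall k, l1_01 ell (u k.+1) + Obs ell u k = 0.
Proof.
move=> hh hu1 hrec.
have l01D : forall x y, l1_01 ell (x + y) = l1_01 ell x + l1_01 ell y.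
  case: hL => _ _ hML _ _ x y.
  have H := hML [::] [::] 0 1 1 x y; rewrite !scale1r in H; exact: H.
have l01N : forall x, l1_01 ell (- x) = - l1_01 ell x.
  move=> x; apply/eqP; rewrite -subr_eq0 opprK -l01D addNr.
  by apply/eqP; exact: (ML0 [::] [::] 0 1).
have l12D : forall x y, l1_12 ell (x + y) = l1_12 ell x + l1_12 ell y.
  move=> x y; exact: (L2D x y [::]).
elim/ltn_ind => k IH.
case: k IH => [|k] IH.
  by rewrite /Obs big_geq // addr0.
rewrite hrec // l01N.
set y := Obs ell u k.+1.
have hy : l1_12 ell y = 0.
  have hG := Gp_obs (N := k.+2) (k := k.+1) (leqnn _).
  have : l1_12 ell (Gp k.+3 (k.+2 + k.+2).+1 k.+2) = 0.
    apply: l2_of_claim => p hp.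
    case: p hp => [|q] hq; first exact: Gp0.
    rewrite Gp_obs; last by lia.
    by apply: IH; lia.
  by rewrite hG l12D l1l1 add0r.
have := hh y; rewrite hy linear0 addr0 => ->.
by rewrite addNr.
Qed.

End Main.

Theorem proposition5p12 (R : realType) (d : int -> nat) (n : nat)
  (ell : seq (Linf_hom R d) -> Linf_hom R d)
  (h1 : {linear 'rV[R]_(d 1) -> 'rV[R]_(d 0)})
  (h2 : {linear 'rV[R]_(d 2) -> 'rV[R]_(d 1)})
  (u : nat -> 'rV[R]_(d 0)) :
  d 0 = n ->
  is_Linf ell ->
  H1_vanishes ell ->
  (forall y : 'rV[R]_(d 1), l1_01 ell (h1 y) + h2 (l1_12 ell y) = y) ->
  u 0%N = 0 ->
  l1_01 ell (u 1%N) = 0 ->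
  (forall k : nat, (1 <= k)%N -> u k.+1 = - h1 (Obs ell u k)) ->
  formal_MC ell u.
Proof.
move=> _ hL _ hh hu0 hu1 hrec; split => //.
exact: (mainMC hL hu0 hh hu1 hrec).
Qed.
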